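(* Let $X$ be a (real or complex) Banach space, $S$ a Hausdorff topological space, and $J\colon X\to C^{b}(S)$ a nice embedding (see context). For $s\in S$ let $p_s=J^{*}(\delta_s)\in X^{*}$, let $\Pi_s$ be the $L$-projection of $X^*$ onto $\operatorname{lin}\{p_s\}$, and let $\pi_s\in X^{**}$ be the functional with $\Pi_s(x^* )=\pi_s(x^* )\,p_s$ for all $x^*\in X^*$. Let $T\in L(X)$, put $q_s=T^{*}(p_s)$ for $s\in S$, and for $\varepsilon>0$ let $U_\varepsilon=\{s\in S:\ \|q_s\|>\|T\|-\varepsilon\}$ (an open subset of $S$). Then $T$ satisfies the Daugavet equation $\|\mathrm{Id}+T\|=1+\|T\|$ if and only if $$\sup_{s\in U_\varepsilon}\bigl(|1+\pi_s(q_s)|-(1+|\pi_s(q_s)|)\bigr)\ge 0\qquad\text{for all }\varepsilon>0.$$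
   Context: $C^{b}(S)$ denotes the sup-normed Banach space of bounded continuous scalar-valued functions on $S$, and $\delta_s$ the functional $f\mapsto f(s)$ on it. A closed subspace $F$ of a Banach space $E$ is an $L$-summand if there is a projection $\Pi$ of $E$ onto $F$ (an $L$-projection) with $\|\xi\|=\|\Pi\xi\|+\|\xi-\Pi\xi\|$ for all $\xi\in E$. A linear map $J\colon X\to C^b(S)$ is a nice embedding if $J$ is an isometry and for every $s\in S$: (N1) $p_s:=J^*(\delta_s)$ satisfies $\|p_s\|=1$; (N2) $\operatorname{lin}\{p_s\}$ is an $L$-summand in $X^*$. $L(X)$ denotes the bounded linear operators on $X$. *)

(* Defs.v *)
From HB Require Import structures.
From mathcomp Require Import all_boot all_order all_algebra.
From mathcomp Require Import all_classical all_reals.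
From mathcomp Require Import topology normedtype.
From mathcomp Require Export complex.

Set Implicit Arguments. Unset Strict Implicit. Unset Printing Implicit Defensive.
Import Order.TTheory GRing.Theory Num.Theory.
Import numFieldNormedType.Exports.
Local Open Scope classical_set_scope.
Local Open Scope ring_scope.

(* All norm values live in the scalar field K (real elements of K).        *)

Definition lubK {K : numFieldType} (A : set K) (c : K) : Prop :=
  (forall x, A x -> x <= c) /\ (forall d, (forall x, A x -> x <= d) -> c <= d).

(* The supremum of A (chosen), whenever it exists; default 0 otherwise. *)
Definition supK {K : numFieldType} (A : set K) : K := xget 0 (lubK A).

Definition opnorm {K : numFieldType} {X Y : normedModType K} (f : X -> Y) : K :=
  supK ((fun x => `|f x|) @` [set x : X | `|x| <= 1]).

Definition dnorm {K : numFieldType} {X : normedModType K} (f : X -> K) : K :=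
  supK ((fun x => `|f x|) @` [set x : X | `|x| <= 1]).

Definition is_dual {K : numFieldType} {X : normedModType K} (f : X -> K) : Prop :=
  (forall (a : K) (x y : X), f (a *: x + y) = a * f x + f y) /\ continuous f.

Definition lin1 {K : numFieldType} {X : normedModType K} (p : X -> K) : set (X -> K) :=
  [set g | exists a : K, g = (fun x => a * p x)].

Definition is_Lprojection {K : numFieldType} {X : normedModType K}
  (P : (X -> K) -> (X -> K)) (F : set (X -> K)) : Prop :=
  [/\ (forall xi, is_dual xi -> is_dual (P xi)),
      (forall (a : K) xi eta, is_dual xi -> is_dual eta ->
          P (fun x => a * xi x + eta x) = (fun x => a * P xi x + P eta x)),
      (forall xi, is_dual xi -> P (P xi) = P xi),
      (forall xi, is_dual xi -> F (P xi)) /\ (forall eta, F eta -> exists2 xi, is_dual xi & P xi = eta)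
    & (forall xi, is_dual xi ->
          dnorm xi = dnorm (P xi) + dnorm (fun x => xi x - P xi x))].

Definition is_Lsummand {K : numFieldType} {X : normedModType K} (F : set (X -> K)) : Prop :=
  (forall g, F g -> is_dual g) /\ exists P, is_Lprojection P F.

(* Sup norm on C^b(S) (with the convention sup of the empty family = 0). *)
Definition supnorm {K : numFieldType} {S : Type} (f : S -> K) : K :=
  supK (range (fun s => `|f s|) `|` [set 0]).

(* J : X -> C^b(S) is a nice embedding. J x is a bounded continuous function
   S -> K; J^*(delta_s) is the functional x |-> J x s. *)
Definition nice_embedding {K : numFieldType} {X : normedModType K} {S : topologicalType}
  (J : X -> S -> K) : Prop :=
  [/\ (forall (a : K) (x y : X), J (a *: x + y) = (fun s => a * J x s + J y s)),
      (forall x, continuous (J x) /\ exists M : K, forall s, `|J x s| <= M),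
      (forall x, supnorm (J x) = `|x|),
      (forall s, dnorm (fun x => J x s) = 1)
    & (forall s, is_Lsummand (lin1 (fun x => J x s)))].

(* Main.v *)
Require Import Defs.
From HB Require Import structures.
From mathcomp Require Import all_boot all_order all_algebra.
From mathcomp Require Import all_classical all_reals.
From mathcomp Require Import topology normedtype.
From mathcomp Require Import complex.
From mathcomp Require Import ring.
Set Implicit Arguments. Unset Strict Implicit. Unset Printing Implicit Defensive.
Import Order.TTheory GRing.Theory Num.Theory.
Import numFieldNormedType.Exports.
Local Open Scope classical_set_scope.
Local Open Scope ring_scope.
Local Open Scope complex_scope.
Definition HasSup (K : numFieldType) := forall A : set K, (exists x, A x) ->
  (forall x, A x -> x \is Num.real) -> (exists M, forall x, A x -> x <= M) ->
  exists c, lubK A c.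

Lemma real_of_le (K : numDomainType) (x y : K) : x \is Num.real -> x <= y -> y \is Num.real.
Proof. by move=> xr xy; rewrite -(subrK x y) realD // ger0_real // subr_ge0. Qed.

Lemma lubK_supK (K : numFieldType) (A : set K) c : lubK A c -> supK A = c.
Proof.
move=> Hc; rewrite /supK; have := xgetPex 0 (ex_intro _ c Hc).
move: (xget 0 _) => c' [u1 l1]; case: Hc => [u2 l2].
by apply/le_anti; rewrite l1 // l2.
Qed.

Lemma lubK_approx (K : numFieldType) (A : set K) c d :
  lubK A c -> (forall x, A x -> x \is Num.real) -> d \is Num.real -> d < c ->
  exists x, A x /\ d < x.
Proof.
move=> [u l] Ar dr dc; apply: contrapT => H.
have : c <= d.
  apply: l => x Ax; rewrite (real_leNgt (Ar x Ax) dr); apply/negP => dx; apply: H; by exists x.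
by move=> cd; have := lt_le_trans dc cd; rewrite ltxx.
Qed.

Definition img (K : numFieldType) (X : normedModType K) (g : X -> K) :=
  g @` [set x : X | `|x| <= 1].

Lemma img_lub (K : numFieldType) (HS : HasSup K) (X : normedModType K) (g : X -> K) B :
  (forall x, 0 <= g x) -> (forall x, `|x| <= 1 -> g x <= B) ->
  lubK (img g) (supK (img g)).
Proof.
move=> g0 gB; have [c Hc] : exists c, lubK (img g) c.
  apply: HS.
  - by exists (g 0), 0 => //=; rewrite normr0.
  - by move=> _ [x _ <-]; apply: ger0_real.
  - by exists B => _ [x /= x1 <-]; apply: gB.
by rewrite (lubK_supK Hc).
Qed.

Lemma img_ge0 (K : numFieldType) (X : normedModType K) (g : X -> K) c :
  (forall x, 0 <= g x) -> lubK (img g) c -> 0 <= c.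
Proof.
move=> g0 [u _]; apply: le_trans (g0 0) _; apply: u; exists 0 => //=.
by rewrite normr0.
Qed.

Lemma dnorm_scale (K : numFieldType) (HS : HasSup K) (X : normedModType K) (f : X -> K) B a :
  (forall x, `|x| <= 1 -> `|f x| <= B) ->
  dnorm (fun x => a * f x) = `|a| * dnorm f.
Proof.
move=> fB; rewrite /dnorm.
have Hf := img_lub HS (g := fun x => `|f x|) (fun x => normr_ge0 _) fB.
set c := supK _ in Hf *.
apply: lubK_supK; case: Hf => [u l]; split.
- move=> _ [x x1 <-]; rewrite normrM ler_wpM2l //; apply: u; by exists x.
- move=> d Hd.
  have d0 : 0 <= d.
    apply: le_trans (normr_ge0 (a * f 0)) _; apply: Hd; exists 0 => //=; by rewrite normr0.
  have [->|a0] := eqVneq a 0; first by rewrite normr0 mul0r.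
  have a0' : 0 < `|a| by rewrite normr_gt0.
  rewrite mulrC -ler_pdivlMr //; apply: l => _ [x x1 <-].
  rewrite ler_pdivlMr // mulrC -normrM; apply: Hd; by exists x.
Qed.

Lemma smaller_pos (K : numFieldType) (a b : K) : 0 < a -> 0 < b ->
  exists z, [/\ 0 < z, z <= a & z <= b].
Proof.
move=> a0 b0; have ab0 : 0 < a + b by apply: addr_gt0.
exists (a * b / (a + b)); split.
- by apply: divr_gt0 => //; apply: mulr_gt0.
- by rewrite ler_pdivrMr // (ler_pM2l a0) lerDr ltW.
- by rewrite ler_pdivrMr // (mulrC a b) (ler_pM2l b0) lerDl ltW.
Qed.
Lemma HasSup_real (R : realType) : HasSup R.
Proof.
move=> A [x0 Ax0] _ [M HM]; exists (sup A); split.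
- apply: sup_upper_bound; split; [by exists x0 | by exists M].
- by move=> d Hd; apply: ge_sup; [exists x0 | ].
Qed.

Lemma complex_real (R : realType) (x : R[i]) : x \is Num.real -> x = (@complex.Re R x)%:C.
Proof.
case: x => a b; rewrite realE !lecE /= => /orP[/andP[/eqP H _]|/andP[/eqP H _]].
- by rewrite H.
- by rewrite -H.
Qed.

Lemma HasSup_complex (R : realType) : HasSup R[i].
Proof.
move=> A [x0 Ax0] Ar [M HM].
pose B := [set r : R | A r%:C].
have Bx0 : B (@complex.Re R x0).
  by move: (Ax0); rewrite {1}(complex_real (Ar _ Ax0)).
have Bub : ubound B (@complex.Re R M).
  by move=> r Br; have := HM _ Br; rewrite lecE => /andP[_].
have hs : has_sup B by split; [exists (@complex.Re R x0) | exists (@complex.Re R M)].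
exists (sup B)%:C; split.
- move=> x Ax; rewrite (complex_real (Ar _ Ax)) lecR; apply: sup_upper_bound => //.
  by move: (Ax); rewrite {1}(complex_real (Ar _ Ax)).
- move=> d Hd; have dr : d \is Num.real by apply: real_of_le (Ar _ Ax0) (Hd _ Ax0).
  rewrite (complex_real dr) lecR; apply: ge_sup; first by exists (@complex.Re R x0).
  by move=> r Br; have := Hd _ Br; rewrite {1}(complex_real dr) lecR.
Qed.
Lemma main (K : numFieldType) (HS : HasSup K)
    (X : completeNormedModType K) (S : topologicalType)
           (J : X -> S -> K) (pi : S -> (X -> K) -> K) (T : {linear X -> X}) :
      hausdorff_space S ->
      nice_embedding J ->
      (forall s : S, is_Lprojection (fun xi x => pi s xi * J x s) (lin1 (fun x => J x s))) ->
      continuous T ->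
      (opnorm (fun x => x + T x) = 1 + opnorm T <->
       forall eps : K, 0 < eps ->
         exists c : K,
           lubK ((fun s => `|1 + pi s (fun x => J (T x) s)| - (1 + `|pi s (fun x => J (T x) s)|))
                 @` [set s | opnorm T - eps < dnorm (fun x => J (T x) s)]) c
           /\ 0 <= c).
Proof.
move=> _ [Jlin Jbd Jnorm Jp1 _] HP Tc.
have [r [r0 Tr]] : exists r : K, 0 < r /\ forall x, `|T x| <= r * `|x|.
  have := (linear_boundedP T).1 ((linear_bounded_continuous T).2 Tc).
  move=> [M [Mr HM]]; exists (`|M| + 1); split.
    by rewrite ltr_wpDl.
  apply: HM; rewrite (le_lt_trans (real_ler_norm Mr)) // ltrDl //.
have Tb : forall x : X, `|x| <= 1 -> `|T x| <= r.
  move=> x x1; apply: le_trans (Tr x) _; rewrite -{2}(mulr1 r) ler_wpM2l // ltW //.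
have Jsup : forall x : X, lubK (range (fun s => `|J x s|) `|` [set 0]) `|x|.
  move=> x; rewrite -Jnorm /supnorm; have [c Hc] : exists c, lubK (range (fun s => `|J x s|) `|` [set 0]) c.
    apply: HS.
    - by exists 0; right.
    - by move=> y [[s _ <-]|->]; [apply: normr_real | apply: real0].
    - have [_ [M HM]] := Jbd x; exists `|M| => y [[s _ <-]|->].
        by apply: le_trans (HM s) _; apply: real_ler_norm (real_of_le (normr_real _) (HM s)).
      by [].
  by rewrite (lubK_supK Hc).
have Hpb : forall x s, `|J x s| <= `|x|.
  by move=> x s; case: (Jsup x) => u _; apply: u; left; exists s.
have Happ : forall (x : X) d, 0 <= d -> d < `|x| -> exists s, d < `|J x s|.
  move=> x d d0 dx.
  have Jr : forall y, (range (fun s => `|J x s|) `|` [set 0]) y -> y \is Num.real.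
    by move=> y [[s _ <-]|->]; [apply: normr_real | apply: real0].
  have [y [[[s _ <-]|->] dy]] := lubK_approx (Jsup x) Jr (ger0_real d0) dx.
  - by exists s.
  - by move: (le_lt_trans d0 dy); rewrite ltxx.
have JB : forall s u v, J u s - J v s = J (u - v) s.
  by move=> s u v; rewrite -[u - v]addrC -(scaleN1r v) Jlin mulN1r addrC.
have pc : forall s, continuous (fun x => J x s).
  move=> s x; apply/cvgrPdist_lt => e e0; near=> t.
  rewrite JB; apply: le_lt_trans (Hpb _ s) _; near: t.
  by apply: (@cvgr_dist_lt _ _ _ _ _ id) => //; exact: cvg_id.
have pd : forall s, is_dual (fun x => J x s).
  by move=> s; split; [move=> a x y; rewrite Jlin | exact: pc].
have qd : forall s, is_dual (fun x => J (T x) s).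
  move=> s; split; first by move=> a x y; rewrite linearP Jlin.
  by move=> x; apply: (continuous_comp (Tc x) (pc s (T x))).
have pqd : forall s, is_dual (fun x => J (x + T x) s).
  move=> s; split.
    move=> a x y; rewrite (_ : a *: x + y + T (a *: x + y) = a *: (x + T x) + (y + T y)).
      by rewrite Jlin.
    by rewrite linearP scalerDr addrACA.
  have h : continuous (fun x => x + T x).
    move=> x; apply: cvgD; [exact: cvg_id | exact: Tc].
  by move=> x; apply: (continuous_comp (h x) (pc s _)).
have Ldec : forall s, dnorm (fun x => J (x + T x) s) =
    1 + dnorm (fun x => J (T x) s) +
    (`|1 + pi s (fun x => J (T x) s)| - (1 + `|pi s (fun x => J (T x) s)|)).
  move=> s; case: (HP s) => Pd Plin Pid [PF Psurj] Pn.
  have pB : forall x : X, `|x| <= 1 -> `|J x s| <= 1.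
    by move=> x x1; apply: le_trans (Hpb x s) x1.
  have pi1 : pi s (fun x => J x s) = 1.
    have [xi xid Pxi] := Psurj (fun x => J x s)
      (ex_intro _ 1 (funext (fun x => esym (mul1r _)))).
    have E : (fun x => pi s (fun x => J x s) * J x s) = (fun x => J x s).
      by rewrite -{1}Pxi Pid.
    apply: contrapT => ne.
    have J0 : forall x, J x s = 0.
      move=> x; have := congr1 (fun f => f x) E => /= /eqP.
      rewrite -subr_eq0 -{2}(mul1r (J x s)) -mulrBl mulf_eq0 subr_eq0.
      by case/orP => [/eqP//|/eqP].
    have := img_lub HS (fun x => normr_ge0 (J x s)) pB.
    rewrite -/(dnorm _) Jp1 => -[_ l].
    have : (1 : K) <= 0 by apply: l => _ [x _ <-]; rewrite J0 normr0.
    by rewrite ler10.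
  have Np : forall a, dnorm (fun x => a * J x s) = `|a|.
    by move=> a; rewrite (dnorm_scale HS _ pB) Jp1 mulr1.
  set pq := pi s (fun x => J (T x) s).
  have Nq := Pn _ (qd s); rewrite /= -/pq Np in Nq.
  have E1 : (fun x => J (x + T x) s) = (fun x => 1 * J x s + J (T x) s).
    apply: funext => x; have := congr1 (fun f => f s) (Jlin 1 x (T x)).
    by rewrite scale1r.
  have PLx : forall x, pi s (fun x => 1 * J x s + J (T x) s) * J x s = (1 + pq) * J x s.
    move=> x; have := congr1 (fun f => f x) (Plin 1 _ _ (pd s) (qd s)) => /= ->.
    by rewrite pi1 !mul1r mulrDl mul1r.
  have Npq := Pn _ (pqd s); rewrite E1 in Npq; rewrite E1 Npq.
  have -> : (fun x => pi s (fun x => 1 * J x s + J (T x) s) * J x s) = (fun x => (1 + pq) * J x s).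
    by apply: funext => x; rewrite PLx.
  have -> : (fun x => J (x + T x) s - pi s (fun x => 1 * J x s + J (T x) s) * J x s)
          = (fun x => J (T x) s - pq * J x s).
    by apply: funext => x; rewrite PLx (congr1 (fun f => f x) E1) !mul1r mulrDl mul1r opprD addrACA subrr add0r.
  rewrite Np Nq; set r1 := dnorm _.
  ring.
pose D s := `|1 + pi s (fun x => J (T x) s)| - (1 + `|pi s (fun x => J (T x) s)|).
have Dle0 : forall s, D s <= 0.
  by move=> s; rewrite /D subr_le0; apply: le_trans (ler_normD _ _) _; rewrite normr1.
have Dr : forall s, D s \is Num.real.
  move=> s; rewrite /D; apply: realB; first exact: normr_real.
  by apply: realD; [exact: real1 | exact: normr_real].
have HN : lubK (img (fun x => `|T x|)) (opnorm T).
  exact: (img_lub HS (fun x => normr_ge0 _) Tb).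
have HM : lubK (img (fun x => `|x + T x|)) (opnorm (fun x => x + T x)).
  apply: (img_lub HS (B := 1 + r) (fun x => normr_ge0 _)) => x x1.
  by apply: le_trans (ler_normD _ _) _; apply: lerD => //; exact: Tb.
have N0 : 0 <= opnorm T by apply: img_ge0 HN.
have M0 : 0 <= opnorm (fun x => x + T x) by apply: img_ge0 HM.
have Hdq : forall s, lubK (img (fun x => `|J (T x) s|)) (dnorm (fun x => J (T x) s)).
  move=> s; apply: (img_lub HS (B := r) (fun x => normr_ge0 _)) => x x1.
  by apply: le_trans (Hpb _ s) _; apply: Tb.
have Hdpq : forall s, lubK (img (fun x => `|J (x + T x) s|)) (dnorm (fun x => J (x + T x) s)).
  move=> s; apply: (img_lub HS (B := 1 + r) (fun x => normr_ge0 _)) => x x1.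
  apply: le_trans (Hpb _ s) _; apply: le_trans (ler_normD _ _) _; apply: lerD => //; exact: Tb.
have F1 : forall s, dnorm (fun x => J (T x) s) <= opnorm T.
  move=> s; case: (Hdq s) => _ l; apply: l => _ [x x1 <-].
  apply: le_trans (Hpb _ s) _; case: HN => u _; apply: u; by exists x.
have F5 : forall s, dnorm (fun x => J (x + T x) s) <= opnorm (fun x => x + T x).
  move=> s; case: (Hdpq s) => _ l; apply: l => _ [x x1 <-].
  apply: le_trans (Hpb _ s) _; case: HM => u _; apply: u; by exists x.
have imgr : forall (Y : normedModType K) (g : X -> Y) y, img (fun x => `|g x|) y -> y \is Num.real.
  by move=> Y g _ [x _ <-]; apply: normr_real.
have F3p : forall d, 0 <= d -> d < opnorm (fun x => x + T x) ->
    exists s, d < dnorm (fun x => J (x + T x) s).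
  move=> d d0 dM.
  have [_ [[x x1 <-] dx]] := lubK_approx HM (imgr _ (fun x => x + T x)) (ger0_real d0) dM.
  have [s ds] := Happ _ _ d0 dx; exists s; apply: lt_le_trans ds _.
  case: (Hdpq s) => u _; apply: u; by exists x.
have Nr : opnorm T \is Num.real by apply: ger0_real.
have Mr : opnorm (fun x => x + T x) \is Num.real by apply: ger0_real.
have Ldec' : forall s, dnorm (fun x => J (x + T x) s) = 1 + dnorm (fun x => J (T x) s) + D s.
  exact: Ldec.
have F3 : forall d, d \is Num.real -> d < opnorm (fun x => x + T x) ->
    0 < opnorm (fun x => x + T x) -> exists s, d < dnorm (fun x => J (x + T x) s).
  move=> d dr dM M0'; have [d0|d0] := boolP (0 <= d); first exact: F3p.
  have [s Hs] := F3p 0 (lexx 0) M0'; exists s; apply: lt_trans Hs.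
  by rewrite real_ltNge ?real0.
have Hd : opnorm (fun x => x + T x) = 1 + opnorm T -> forall a b, 0 < a -> 0 < b ->
    exists s, opnorm T - a < dnorm (fun x => J (T x) s) /\ - b < D s.
  move=> HMN a b a0 b0; have [z [z0 za zb]] := smaller_pos a0 b0.
  have M1 : 1 + opnorm T - z < opnorm (fun x => x + T x) by rewrite HMN gtrBl.
  have M0' : 0 < opnorm (fun x => x + T x).
    by rewrite HMN; apply: lt_le_trans ltr01 _; rewrite lerDl.
  have [s Hs] := F3 (1 + opnorm T - z) (realB (realD (real1 K) Nr) (gtr0_real z0)) M1 M0'.
  exists s; rewrite Ldec' in Hs; split.
  - apply: le_lt_trans (_ : opnorm T - a <= opnorm T - z) _; first by rewrite lerD2l lerN2.
    have H1 : 1 + (opnorm T - z) < 1 + dnorm (fun x => J (T x) s).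
      by rewrite addrA; apply: lt_le_trans Hs _; rewrite gerDl.
    by rewrite ltrD2l in H1.
  - apply: le_lt_trans (_ : - b <= - z) _; first by rewrite lerN2.
    have H2 : (1 + opnorm T) + - z < (1 + opnorm T) + D s.
      by apply: lt_le_trans Hs _; rewrite lerD2r lerD2l F1.
    by rewrite ltrD2l in H2.
split.
- move=> HMN eps e0.
  have [s0 [Hs0 _]] := Hd HMN eps eps e0 e0.
  have [c Hc] : exists c, lubK (D @` [set s | opnorm T - eps < dnorm (fun x => J (T x) s)]) c.
    apply: HS.
    + by exists (D s0), s0.
    + by move=> _ [s _ <-]; exact: Dr.
    + by exists 0 => _ [s _ <-]; exact: Dle0.
  exists c; split => //.
  have cr : c \is Num.real by apply: real_of_le (Dr s0) (Hc.1 _ _); exists s0.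
  apply: contrapT => nc.
  have c0 : c < 0 by rewrite real_ltNge ?real0 //; apply/negP.
  have c0' : 0 < - c by rewrite oppr_gt0.
  have [s [Hs1 Hs2]] := Hd HMN eps (- c) e0 c0'.
  rewrite opprK in Hs2.
  have : D s <= c by apply: Hc.1; exists s.
  by move=> /(lt_le_trans Hs2); rewrite ltxx.
- move=> H; apply/le_anti/andP; split.
  + case: HM => _ l; apply: l => _ [x x1 <-]; apply: le_trans (ler_normD _ _) _.
    apply: lerD => //; case: HN => u _; apply: u; by exists x.
  + rewrite (real_leNgt (realD (real1 K) Nr) Mr); apply/negP => lt.
    pose e := (1 + opnorm T - opnorm (fun x => x + T x)) / 2.
    have e0 : 0 < e by rewrite /e divr_gt0 // subr_gt0.
    have [c [Hc c0]] := H e e0.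
    have Dr' : forall y, (D @` [set s | opnorm T - e < dnorm (fun x => J (T x) s)]) y -> y \is Num.real.
      by move=> _ [s _ <-]; exact: Dr.
    have ec : - e < c by apply: lt_le_trans c0; rewrite oppr_lt0.
    have er : - e \is Num.real by rewrite realN gtr0_real.
    have [_ [[s Hs1 <-] Hs2]] := lubK_approx Hc Dr' er ec.
    have ee : e + e = 1 + opnorm T - opnorm (fun x => x + T x) by rewrite /e -splitr.
    have E : 1 + (opnorm T - e) + - e = opnorm (fun x => x + T x).
      transitivity (1 + opnorm T - (e + e)); first ring.
      by rewrite ee; ring.
    have : opnorm (fun x => x + T x) < dnorm (fun x => J (x + T x) s).
      by rewrite Ldec' -E; apply: ltrD => //; rewrite ltrD2l.
    by move=> /(lt_le_trans)/(_ (F5 s)); rewrite ltxx.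
Unshelve. all: by end_near.
Qed.
Theorem lemma2p1 :
  let stmt := fun K : numFieldType =>
    forall (X : completeNormedModType K) (S : topologicalType)
           (J : X -> S -> K) (pi : S -> (X -> K) -> K) (T : {linear X -> X}),
      hausdorff_space S ->
      nice_embedding J ->
      (forall s : S, is_Lprojection (fun xi x => pi s xi * J x s) (lin1 (fun x => J x s))) ->
      continuous T ->
      (opnorm (fun x => x + T x) = 1 + opnorm T <->
       forall eps : K, 0 < eps ->
         exists c : K,
           lubK ((fun s => `|1 + pi s (fun x => J (T x) s)| - (1 + `|pi s (fun x => J (T x) s)|))
                 @` [set s | opnorm T - eps < dnorm (fun x => J (T x) s)]) c
           /\ 0 <= c)
  in forall R : realType, stmt R /\ stmt R[i].
Proof.
move=> stmt R; split; move=> X S J pi T; apply: main.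
- exact: HasSup_real.
- exact: HasSup_complex.
Qed.
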